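(* The axiom system $\mathbf{AX}^{f}=\{\mathrm{Taut},\mathrm{MP},F1,F2,F3,F4,F5,F6\}$ is sound and complete for formulas about linear inequalities over real-valued functions with nonempty domain: such a formula is provable in $\mathbf{AX}^f$ iff it is valid.
   Context: Formulas about linear inequalities over real-valued functions are Boolean combinations of inequalities $a_1v_1+\cdots+a_kv_k\ge\tilde c$, where $v_1,v_2,\ldots$ are variables and $a_i,c$ are real numbers. Such a formula is satisfied by an assignment of functions $D\to\mathbb R$ (for a nonempty set $D$) to the variables if it holds when $\tilde c$ is read as the constant function $c$ on $D$, sums and scalar multiples pointwise, and $\ge$ as the pointwise order; Boolean connectives classical. It is valid if satisfied by every such assignment for every nonempty $D$. Abbreviations: $t\le\tilde d$ is $-t\ge\widetilde{-d}$; $t>\tilde d$ is $t\ge\tilde d\wedge\neg(t\le\tilde d)$. Axioms: Taut: all instances of propositional tautologies. MP: from $f$ and $f\Rightarrow g$ infer $g$. F1: $v-v\ge\tilde0$. F2: $(a_1v_1+\cdots+a_kv_k\ge\tilde c)\Leftrightarrow(a_1v_1+\cdots+a_kv_k+0v_{k+1}\ge\tilde c)$. F3: $(a_1v_1+\cdots+a_kv_k\ge\tilde c)\Leftrightarrow(a_{j_1}v_{j_1}+\cdots+a_{j_k}v_{j_k}\ge\tilde c)$ for any permutation $j_1,\ldots,j_k$ of $1,\ldots,k$. F4: $(a_1v_1+\cdots+a_kv_k\ge\tilde c)\wedge(a'_1v_1+\cdots+a'_kv_k\ge\tilde c')\Rightarrow((a_1+a'_1)v_1+\cdots+(a_k+a'_k)v_k\ge\widetilde{c+c'})$.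 F5: $(a_1v_1+\cdots+a_kv_k\ge\tilde c)\Leftrightarrow(da_1v_1+\cdots+da_kv_k\ge\widetilde{dc})$ for $d>0$. F6: $(a_1v_1+\cdots+a_kv_k\ge\tilde c)\Rightarrow(a_1v_1+\cdots+a_kv_k>\tilde d)$ if $c>d$. *)

(* Defs.v *)
From Stdlib Require Import Reals List Permutation.
Import ListNotations.
Open Scope R_scope.

(** A term a1 v1 + ... + ak vk is the list [(a1,v1); ...; (ak,vk)];
    variables are natural numbers. *)
Definition term := list (R * nat).

Inductive form : Type :=
| FIneq : term -> R -> form
| FNot  : form -> form
| FAnd  : form -> form -> form.

Definition FOr (f g : form) : form := FNot (FAnd (FNot f) (FNot g)).
Definition FImp (f g : form) : form := FNot (FAnd f (FNot g)).
Definition FIff (f g : form) : form := FAnd (FImp f g) (FImp g f).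

Definition FLe (t : term) (d : R) : form :=
  FIneq (map (fun p => (- fst p, snd p)) t) (- d).
Definition FGt (t : term) (d : R) : form := FAnd (FIneq t d) (FNot (FLe t d)).

Fixpoint eval_term {D : Type} (s : nat -> D -> R) (t : term) (x : D) : R :=
  match t with
  | [] => 0
  | (a, v) :: t' => a * s v x + eval_term s t' x
  end.

Fixpoint sat {D : Type} (s : nat -> D -> R) (f : form) : Prop :=
  match f with
  | FIneq t c => forall x : D, eval_term s t x >= c
  | FNot g => ~ sat s g
  | FAnd g h => sat s g /\ sat s h
  end.

Definition valid (f : form) : Prop :=
  forall (D : Type), inhabited D -> forall s : nat -> D -> R, sat s f.

Inductive pform : Type :=
| PVar : nat -> pform
| PNot : pform -> pform
| PAnd : pform -> pform -> pform.

Fixpoint peval (val : nat -> bool) (p : pform) : bool :=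
  match p with
  | PVar n => val n
  | PNot q => negb (peval val q)
  | PAnd q r => andb (peval val q) (peval val r)
  end.

Definition tautology (p : pform) : Prop := forall val, peval val p = true.

Fixpoint psubst (sb : nat -> form) (p : pform) : form :=
  match p with
  | PVar n => sb n
  | PNot q => FNot (psubst sb q)
  | PAnd q r => FAnd (psubst sb q) (psubst sb r)
  end.

Definition taut_instance (f : form) : Prop :=
  exists (p : pform) (sb : nat -> form), tautology p /\ psubst sb p = f.

Inductive provable : form -> Prop :=
| AxTaut : forall f, taut_instance f -> provable f
| RuleMP : forall f g, provable f -> provable (FImp f g) -> provable g
| AxF1 : forall v : nat, provable (FIneq [(1, v); (-1, v)] 0)
| AxF2 : forall (t : term) (c : R) (v : nat),
    provable (FIff (FIneq t c) (FIneq (t ++ [(0, v)]) c))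
| AxF3 : forall (t t' : term) (c : R), Permutation t t' ->
    provable (FIff (FIneq t c) (FIneq t' c))
| AxF4 : forall (l : list (R * R * nat)) (c c' : R),
    provable (FImp
      (FAnd (FIneq (map (fun p => (fst (fst p), snd p)) l) c)
            (FIneq (map (fun p => (snd (fst p), snd p)) l) c'))
      (FIneq (map (fun p => (fst (fst p) + snd (fst p), snd p)) l) (c + c')))
| AxF5 : forall (t : term) (c d : R), d > 0 ->
    provable (FIff (FIneq t c)
                   (FIneq (map (fun p => (d * fst p, snd p)) t) (d * c)))
| AxF6 : forall (t : term) (c d : R), c > d ->
    provable (FImp (FIneq t c) (FGt t d)).

(* Main.v *)
Require Import Defs.
From Stdlib Require Import Reals Lra Lia Psatz List Permutation Classical ClassicalEpsilon.
Import ListNotations.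
Open Scope R_scope.


Definition pimp (p q : pform) := PNot (PAnd p (PNot q)).

Ltac taut3 p A B C :=
  apply AxTaut; exists p, (fun i => match i with 0%nat => A | 1%nat => B | _ => C end);
  split; [let w := fresh "w" in intro w; simpl; destruct (w 0%nat), (w 1%nat), (w 2%nat); reflexivity | reflexivity].

Definition X0 := PVar 0. Definition X1 := PVar 1. Definition X2 := PVar 2.

Lemma imp_trans A B C : provable (FImp A B) -> provable (FImp B C) -> provable (FImp A C).
Proof.
  intros h1 h2.
  assert (T : provable (FImp (FImp A B) (FImp (FImp B C) (FImp A C)))).
  { taut3 (pimp (pimp X0 X1) (pimp (pimp X1 X2) (pimp X0 X2))) A B C. }
  eapply RuleMP; [exact h2|]. eapply RuleMP; [exact h1|exact T].
Qed.

Lemma imp_refl A : provable (FImp A A).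
Proof. taut3 (pimp X0 X0) A A A. Qed.

Lemma weak H B : provable B -> provable (FImp H B).
Proof.
  intro h. assert (T : provable (FImp B (FImp H B))).
  { taut3 (pimp X0 (pimp X1 X0)) B H H. }
  eapply RuleMP; [exact h|exact T].
Qed.

Lemma imp_and H A B : provable (FImp H A) -> provable (FImp H B) -> provable (FImp H (FAnd A B)).
Proof.
  intros h1 h2.
  assert (T : provable (FImp (FImp H A) (FImp (FImp H B) (FImp H (FAnd A B))))).
  { taut3 (pimp (pimp X0 X1) (pimp (pimp X0 X2) (pimp X0 (PAnd X1 X2)))) H A B. }
  eapply RuleMP; [exact h2|]. eapply RuleMP; [exact h1|exact T].
Qed.

Lemma and_l A B : provable (FImp (FAnd A B) A).
Proof. taut3 (pimp (PAnd X0 X1) X0) A B B. Qed.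
Lemma and_r A B : provable (FImp (FAnd A B) B).
Proof. taut3 (pimp (PAnd X0 X1) X1) A B B. Qed.

Lemma and_intro A B : provable A -> provable B -> provable (FAnd A B).
Proof.
  intros h1 h2. assert (T : provable (FImp A (FImp B (FAnd A B)))).
  { taut3 (pimp X0 (pimp X1 (PAnd X0 X1))) A B B. }
  eapply RuleMP; [exact h2|]. eapply RuleMP; [exact h1|exact T].
Qed.

Lemma iff_l A B : provable (FIff A B) -> provable (FImp A B).
Proof. intro h. eapply RuleMP; [exact h| apply and_l]. Qed.
Lemma iff_r A B : provable (FIff A B) -> provable (FImp B A).
Proof. intro h. eapply RuleMP; [exact h| apply and_r]. Qed.

Lemma refute H A : provable (FImp H A) -> provable (FImp H (FNot A)) -> provable (FNot H).
Proof.
  intros h1 h2.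
  assert (T : provable (FImp (FImp H A) (FImp (FImp H (FNot A)) (FNot H)))).
  { taut3 (pimp (pimp X0 X1) (pimp (pimp X0 (PNot X1)) (PNot X0))) H A A. }
  eapply RuleMP; [exact h2|]. eapply RuleMP; [exact h1|exact T].
Qed.

Lemma imp_not_elim A B C : provable (FImp A (FAnd B (FNot C))) -> provable C -> provable (FNot A).
Proof.
  intros h1 h2.
  assert (T : provable (FImp (FImp A (FAnd B (FNot C))) (FImp C (FNot A)))).
  { taut3 (pimp (pimp X0 (PAnd X1 (PNot X2))) (pimp X2 (PNot X0))) A B C. }
  eapply RuleMP; [exact h2|]. eapply RuleMP; [exact h1|exact T].
Qed.

Lemma imp_mp H A : provable (FImp H A) -> provable (FNot A) -> provable (FNot H).
Proof.
  intros h1 h2.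
  assert (T : provable (FImp (FImp H A) (FImp (FNot A) (FNot H)))).
  { taut3 (pimp (pimp X0 X1) (pimp (PNot X1) (PNot X0))) H A A. }
  eapply RuleMP; [exact h2|]. eapply RuleMP; [exact h1|exact T].
Qed.

Lemma mp_imp H A B : provable (FImp H A) -> provable (FImp A B) -> provable (FImp H B).
Proof. apply imp_trans. Qed.



Lemma eval_app {D : Type} (s : nat -> D -> R) t1 t2 x : eval_term s (t1 ++ t2) x = eval_term s t1 x + eval_term s t2 x.
Proof. induction t1 as [|[a v] t IH]; simpl; [lra| rewrite IH; lra]. Qed.

Lemma eval_perm {D : Type} (s : nat -> D -> R) t t' x : Permutation t t' -> eval_term s t x = eval_term s t' x.
Proof.
  induction 1 as [| [a v] l l' _ IH | [a v] [b w] l | l l' l'' _ IH1 _ IH2]; simpl; try lra.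
Qed.

Lemma eval_F4 {D : Type} (s : nat -> D -> R) (l : list (R * R * nat)) x :
  eval_term s (map (fun p => (fst (fst p) + snd (fst p), snd p)) l) x =
  eval_term s (map (fun p => (fst (fst p), snd p)) l) x +
  eval_term s (map (fun p => (snd (fst p), snd p)) l) x.
Proof. induction l as [|[[a b] v] l IH]; simpl; [lra| rewrite IH; lra]. Qed.

Lemma eval_scale {D : Type} (s : nat -> D -> R) d t x : eval_term s (map (fun p => (d * fst p, snd p)) t) x = d * eval_term s t x.
Proof. induction t as [|[a v] t IH]; simpl; [lra| rewrite IH; lra]. Qed.

Lemma eval_neg {D : Type} (s : nat -> D -> R) t x : eval_term s (map (fun p => (- fst p, snd p)) t) x = - eval_term s t x.
Proof. induction t as [|[a v] t IH]; simpl; [lra| rewrite IH; lra]. Qed.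

Definition tv {D : Type} (s : nat -> D -> R) (f : form) : bool := if excluded_middle_informative (sat s f) then true else false.

Lemma sat_psubst {D : Type} (s : nat -> D -> R) sb p : sat s (psubst sb p) <-> peval (fun i => tv s (sb i)) p = true.
Proof.
  induction p as [n|q IH|q IHq r IHr]; simpl.
  - unfold tv. destruct (excluded_middle_informative _); intuition congruence.
  - destruct (peval _ q); simpl; intuition congruence.
  - rewrite IHq, IHr. destruct (peval _ q), (peval _ r); simpl; intuition congruence.
Qed.

Lemma sat_imp {D} (s : nat -> D -> R) f g : sat s (FImp f g) <-> (sat s f -> sat s g).
Proof. simpl. split; intros. - apply NNPP. tauto. - tauto. Qed.

Lemma sat_iff {D} (s : nat -> D -> R) f g : sat s (FIff f g) <-> (sat s f <-> sat s g).
Proof. unfold FIff. simpl. split; intros. - split; intros; apply NNPP; tauto. - tauto. Qed.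

Theorem soundness f : provable f -> valid f.
Proof.
  intros Hp D [d0] s. induction Hp.
  - destruct H as [p [sb [Ht Heq]]]. subst. apply sat_psubst. apply Ht.
  - exact (proj1 (sat_imp s f g) IHHp2 IHHp1).
  - simpl. intro x. lra.
  - apply sat_iff. simpl. split; intros h x; specialize (h x); rewrite ?eval_app in *; simpl in *; lra.
  - apply sat_iff. simpl. split; intros h x; specialize (h x);
    [rewrite <- (eval_perm _ _ _ x H) | rewrite (eval_perm _ _ _ x H)]; exact h.
  - apply sat_imp. simpl. intros [h1 h2] x. specialize (h1 x). specialize (h2 x). rewrite eval_F4. lra.
  - apply sat_iff. simpl. split; intros h x; specialize (h x); rewrite ?eval_scale in *.
    + apply Rle_ge, Rmult_le_compat_l; lra.
    + apply Rge_le in h. apply Rmult_le_reg_l in h; lra.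
  - apply sat_imp. intro h. unfold FGt, FLe. simpl. split; [intro x; specialize (h x); lra|].
    intro h2. specialize (h2 d0). specialize (h d0). rewrite eval_neg in h2. lra.
Qed.


Definition IMP t c t' c' := provable (FImp (FIneq t c) (FIneq t' c')).
Definition zeros (l : term) : term := map (fun p => (0, snd p)) l.
Definition scale (d : R) (t : term) : term := map (fun p => (d * fst p, snd p)) t.

Lemma IMP_trans t c t1 c1 t2 c2 : IMP t c t1 c1 -> IMP t1 c1 t2 c2 -> IMP t c t2 c2.
Proof. apply imp_trans. Qed.
Lemma IMP_refl t c : IMP t c t c.
Proof. apply imp_refl. Qed.
Lemma IMP_eq t c t' c' : t = t' -> c = c' -> IMP t c t' c'.
Proof. intros -> ->. apply IMP_refl. Qed.
Lemma hyp_IMP H t c t' c' : provable (FImp H (FIneq t c)) -> IMP t c t' c' -> provable (FImp H (FIneq t' c')).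
Proof. apply imp_trans. Qed.

Lemma perm_IMP t t' c : Permutation t t' -> IMP t c t' c.
Proof. intro h. apply iff_l, AxF3, h. Qed.

Lemma app0_IMP t c v : IMP t c (t ++ [(0, v)]) c.
Proof. apply iff_l, AxF2. Qed.
Lemma app0_IMP' t c v : IMP (t ++ [(0, v)]) c t c.
Proof. apply iff_r, AxF2. Qed.

Lemma perm_mid (t1 t2 : term) x : Permutation (t1 ++ x :: t2) ((t1 ++ t2) ++ [x]).
Proof.
  rewrite <- Permutation_middle. rewrite <- (Permutation_cons_append). reflexivity.
Qed.

Lemma mid0_IMP t1 t2 c v : IMP (t1 ++ (0, v) :: t2) c (t1 ++ t2) c.
Proof.
  eapply IMP_trans. apply perm_IMP, perm_mid. apply app0_IMP'.
Qed.
Lemma mid0_IMP' t1 t2 c v : IMP (t1 ++ t2) c (t1 ++ (0, v) :: t2) c.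
Proof.
  eapply IMP_trans. apply app0_IMP with (v := v). apply perm_IMP. symmetry. apply perm_mid.
Qed.

Lemma zeros_IMP l t c : IMP t c (t ++ zeros l) c.
Proof.
  revert t. induction l as [|[a v] l IH]; intro t; simpl.
  - rewrite app_nil_r. apply IMP_refl.
  - eapply IMP_trans. apply app0_IMP with (v := v).
    specialize (IH (t ++ [(0,v)])). rewrite <- app_assoc in IH. simpl in IH. apply IH.
Qed.
Lemma zeros_IMP' l t c : IMP (t ++ zeros l) c t c.
Proof.
  revert t. induction l as [|[a v] l IH]; intro t; simpl.
  - rewrite app_nil_r. apply IMP_refl.
  - eapply IMP_trans; [| apply app0_IMP' with (v := v)].
    specialize (IH (t ++ [(0,v)])). rewrite <- app_assoc in IH. simpl in IH. apply IH.
Qed.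

Lemma F4' (l : list (R * R * nat)) c c' A B S :
  A = map (fun p => (fst (fst p), snd p)) l ->
  B = map (fun p => (snd (fst p), snd p)) l ->
  S = map (fun p => (fst (fst p) + snd (fst p), snd p)) l ->
  provable (FImp (FAnd (FIneq A c) (FIneq B c')) (FIneq S (c + c'))).
Proof. intros -> -> ->. apply AxF4. Qed.

Lemma map_pair_id (t : term) : map (fun p => (fst p, snd p)) t = t.
Proof. induction t as [|[a v] t IH]; simpl; [reflexivity| rewrite IH; reflexivity]. Qed.

Lemma sum_H H t1 c1 t2 c2 :
  provable (FImp H (FIneq t1 c1)) -> provable (FImp H (FIneq t2 c2)) ->
  provable (FImp H (FIneq (t1 ++ t2) (c1 + c2))).
Proof.
  intros h1 h2.
  assert (a1 : provable (FImp H (FIneq (t1 ++ zeros t2) c1))) by (eapply hyp_IMP; [exact h1| apply zeros_IMP]).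
  assert (a2 : provable (FImp H (FIneq (zeros t1 ++ t2) c2))).
  { eapply hyp_IMP; [exact h2|]. eapply IMP_trans; [apply zeros_IMP with (l := t1)|].
    apply perm_IMP, Permutation_app_comm. }
  eapply imp_trans; [apply imp_and; [exact a1| exact a2]|].
  apply F4' with (l := map (fun p => (fst p, 0, snd p)) t1 ++ map (fun p => (0, fst p, snd p)) t2).
  - rewrite map_app, !map_map. simpl. rewrite map_pair_id. reflexivity.
  - rewrite map_app, !map_map. simpl. rewrite map_pair_id. reflexivity.
  - rewrite map_app, !map_map. simpl. f_equal.
    + etransitivity; [symmetry; apply (map_pair_id t1)|]. apply map_ext. intro. f_equal. lra.
    + etransitivity; [symmetry; apply (map_pair_id t2)|]. apply map_ext. intro. f_equal. lra.
Qed.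

Lemma sum_IMP t1 c1 t2 c2 : provable (FIneq t2 c2) -> IMP t1 c1 (t1 ++ t2) (c1 + c2).
Proof. intro h. apply sum_H; [apply imp_refl| apply weak, h]. Qed.

Lemma scale_IMP d t c : d > 0 -> IMP t c (scale d t) (d * c).
Proof. intro h. apply iff_l, AxF5, h. Qed.
Lemma scale_IMP' d t c : d > 0 -> IMP (scale d t) (d * c) t c.
Proof. intro h. apply iff_r, AxF5, h. Qed.

Lemma weaken_IMP t c d : d <= c -> IMP t c t d.
Proof.
  intro h. destruct (Rle_lt_or_eq_dec _ _ h) as [h'|h'].
  - eapply imp_trans. apply (AxF6 t c d). lra. unfold FGt. apply and_l.
  - subst. apply IMP_refl.
Qed.

Lemma F1' v : provable (FIneq [(1, v); (-1, v)] 0).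
Proof. apply AxF1. Qed.

Lemma gadget b v : b <> 0 -> provable (FIneq [(b, v); (- b, v)] 0).
Proof.
  intro hb. destruct (Rlt_or_le 0 b) as [hp|hn].
  - eapply RuleMP; [apply F1'|].
    eapply IMP_trans; [apply scale_IMP with (d := b); exact hp|]. apply IMP_eq; simpl; f_equal; try f_equal; try f_equal; lra.
  - eapply RuleMP; [apply F1' with (v := v)|].
    eapply IMP_trans; [apply perm_IMP, perm_swap|].
    eapply IMP_trans; [apply scale_IMP with (d := - b); lra|]. apply IMP_eq; simpl; f_equal; try f_equal; try f_equal; lra.
Qed.


Lemma F4_zero (l : list (R * R * nat)) c A B S :
  A = map (fun p => (fst (fst p), snd p)) l ->
  B = map (fun p => (snd (fst p), snd p)) l ->
  S = map (fun p => (fst (fst p) + snd (fst p), snd p)) l ->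
  provable (FIneq B 0) -> IMP A c S c.
Proof.
  intros hA hB hS hz.
  eapply imp_trans; [apply imp_and; [apply imp_refl| apply weak; exact hz]|].
  eapply imp_trans; [apply F4' with (l := l); eauto|]. apply IMP_eq; [reflexivity| ring].
Qed.

Lemma map_plus0 (t : term) : map (fun x => (fst (fst x) + snd (fst x), snd x)) (map (fun p => (fst p, 0, snd p)) t) = t.
Proof. induction t as [|[a v] t IH]; simpl; [reflexivity| rewrite IH; f_equal; f_equal; ring]. Qed.
Lemma map_fst0 (t : term) : map (fun x => (fst (fst x), snd x)) (map (fun p => (fst p, 0, snd p)) t) = t.
Proof. induction t as [|[a v] t IH]; simpl; [reflexivity| rewrite IH; reflexivity]. Qed.
Lemma map_snd0 (t : term) : map (fun x => (snd (fst x), snd x)) (map (fun p => (fst p, 0, snd p)) t) = zeros t.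
Proof. induction t as [|[a v] t IH]; simpl; [reflexivity| rewrite IH; reflexivity]. Qed.

Lemma gadget_z b v t : b <> 0 -> provable (FIneq ((b, v) :: (- b, v) :: zeros t) 0).
Proof.
  intro hb. eapply RuleMP; [apply (gadget b v hb)|]. apply (zeros_IMP t [(b,v);(-b,v)]).
Qed.

Lemma merge_IMP a b v t c : IMP ((a, v) :: (b, v) :: t) c ((a + b, v) :: t) c.
Proof.
  destruct (Req_dec b 0) as [->|hb].
  - eapply IMP_trans; [apply (mid0_IMP [(a,v)] t c v)|]. apply IMP_eq; [simpl; f_equal; f_equal; ring| reflexivity].
  - eapply IMP_trans.
    + apply F4_zero with (l := (a, b, v) :: (b, - b, v) :: map (fun p => (fst p, 0, snd p)) t)
        (B := (b, v) :: (- b, v) :: zeros t) (S := (a + b, v) :: (b + - b, v) :: t).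
      * simpl. rewrite map_fst0. reflexivity.
      * simpl. rewrite map_snd0. reflexivity.
      * simpl. rewrite map_plus0. reflexivity.
      * apply gadget_z, hb.
    + eapply IMP_trans; [|apply (mid0_IMP [(a+b,v)] t c v)]. apply IMP_eq; [simpl; do 3 f_equal; ring| reflexivity].
Qed.

Lemma merge_IMP' a b v t c : IMP ((a + b, v) :: t) c ((a, v) :: (b, v) :: t) c.
Proof.
  destruct (Req_dec b 0) as [->|hb].
  - eapply IMP_trans; [|apply (mid0_IMP' [(a,v)] t c v)]. apply IMP_eq; [simpl; f_equal; f_equal; ring| reflexivity].
  - eapply IMP_trans; [apply (mid0_IMP' [(a+b,v)] t c v)|]. simpl.
    eapply IMP_trans.
    + apply F4_zero with (l := (a + b, - b, v) :: (0, b, v) :: map (fun p => (fst p, 0, snd p)) t)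
        (B := (- b, v) :: (- - b, v) :: zeros t) (S := (a + b + - b, v) :: (0 + b, v) :: t).
      * simpl. rewrite map_fst0. reflexivity.
      * simpl. rewrite map_snd0. do 3 f_equal. ring.
      * simpl. rewrite map_plus0. reflexivity.
      * apply gadget_z. lra.
    + apply IMP_eq; [simpl; f_equal; [f_equal; ring| f_equal; f_equal; ring]| reflexivity].
Qed.

Fixpoint coef (t : term) (v : nat) : R :=
  match t with
  | [] => 0
  | (a, w) :: t' => (if Nat.eq_dec w v then a else 0) + coef t' v
  end.

Lemma coef_app t1 t2 v : coef (t1 ++ t2) v = coef t1 v + coef t2 v.
Proof. induction t1 as [|[a w] t IH]; simpl; [lra| rewrite IH; lra]. Qed.

Lemma coef_perm t t' v : Permutation t t' -> coef t v = coef t' v.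
Proof.
  induction 1 as [| [a w] l l' _ IH | [a w] [b x] l | l l' l'' _ IH1 _ IH2]; simpl; try lra.
Qed.

Lemma coef_scale d t v : coef (scale d t) v = d * coef t v.
Proof. induction t as [|[a w] t IH]; simpl; [lra| rewrite IH; destruct (Nat.eq_dec w v); lra]. Qed.

Lemma coef_notin t v : ~ In v (map snd t) -> coef t v = 0.
Proof.
  induction t as [|[a w] t IH]; simpl; intro h; [lra|].
  destruct (Nat.eq_dec w v); [tauto|]. rewrite IH; [lra| tauto].
Qed.

Lemma coef_reduced_in r a v : NoDup (map snd r) -> In (a, v) r -> coef r v = a.
Proof.
  induction r as [|[b w] r IH]; simpl; intros hnd hin; [tauto|].
  inversion hnd as [|? ? hn hnd']; subst.
  destruct hin as [e|hin].
  - inversion e; subst. destruct (Nat.eq_dec v v); [|tauto]. rewrite coef_notin; [lra| exact hn].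
  - destruct (Nat.eq_dec w v) as [e|ne].
    + subst. exfalso. apply hn. apply (in_map snd) in hin. exact hin.
    + rewrite IH; auto. lra.
Qed.

Lemma coef_nonzero_in t v : coef t v <> 0 -> exists a, In (a, v) t.
Proof.
  induction t as [|[a w] t IH]; simpl; intro h; [lra|].
  destruct (Nat.eq_dec w v) as [e|ne].
  - subst. exists a. auto.
  - destruct IH as [b hb]; [lra|]. exists b. auto.
Qed.

Definition reduced (r : term) := NoDup (map snd r) /\ forall p, In p r -> fst p <> 0.

Lemma reduced_perm r1 r2 : reduced r1 -> reduced r2 -> (forall v, coef r1 v = coef r2 v) -> Permutation r1 r2.
Proof.
  intros [n1 z1] [n2 z2] hc. apply NoDup_Permutation.
  - eapply NoDup_map_inv; eauto.
  - eapply NoDup_map_inv; eauto.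
  - assert (key : forall r r', NoDup (map snd r) -> NoDup (map snd r') -> (forall p, In p r -> fst p <> 0) ->
       (forall v, coef r v = coef r' v) -> forall x, In x r -> In x r').
    { intros r r' n n' z h [a v] hin.
      pose proof (coef_reduced_in _ _ _ n hin) as e1. pose proof (z _ hin) as az. simpl in az.
      rewrite h in e1. destruct (coef_nonzero_in r' v) as [b hb]; [lra|].
      pose proof (coef_reduced_in _ _ _ n' hb). replace a with b by lra. exact hb. }
    intro x. split; apply key; auto.
Qed.

Definition EQV t u := forall c, IMP t c u c /\ IMP u c t c.

Lemma EQV_refl t : EQV t t.
Proof. intro c. split; apply IMP_refl. Qed.
Lemma EQV_sym t u : EQV t u -> EQV u t.
Proof. intros h c. destruct (h c); split; auto. Qed.
Lemma EQV_trans t u w : EQV t u -> EQV u w -> EQV t w.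
Proof. intros h1 h2 c. destruct (h1 c), (h2 c); split; eapply IMP_trans; eauto. Qed.
Lemma EQV_perm t u : Permutation t u -> EQV t u.
Proof. intros h c. split; apply perm_IMP; auto. symmetry; auto. Qed.

Lemma dup_or_nodup (t : term) : NoDup (map snd t) \/ exists a b v t', Permutation t ((a, v) :: (b, v) :: t').
Proof.
  induction t as [|[a v] t IH].
  - left. constructor.
  - destruct IH as [nd|[a' [b' [w [t' hp]]]]].
    + destruct (in_dec Nat.eq_dec v (map snd t)) as [hin|hn].
      * right. apply in_map_iff in hin. destruct hin as [[b w] [ew hin]]. simpl in ew. subst w.
        apply in_split in hin. destruct hin as [l1 [l2 ->]].
        exists a, b, v, (l1 ++ l2). constructor. symmetry. apply Permutation_middle.
      * left. simpl. constructor; auto.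
    + right. exists a', b', w, ((a, v) :: t').
      eapply perm_trans; [apply perm_skip, hp|].
      eapply perm_trans; [apply perm_swap|]. apply perm_skip, perm_swap.
Qed.

Lemma reduce_ex n : forall t, (length t <= n)%nat ->
  exists r, EQV t r /\ reduced r /\ forall v, coef r v = coef t v.
Proof.
  induction n as [|n IH]; intros t hl.
  - destruct t; [|simpl in hl; lia]. exists []. split; [apply EQV_refl|]. split; [split; [constructor| simpl; tauto]| reflexivity].
  - destruct (classic (exists p, In p t /\ fst p = 0)) as [[[a v] [hin ha]]|hno].
    + simpl in ha. subst a. apply in_split in hin. destruct hin as [t1 [t2 ->]].
      destruct (IH (t1 ++ t2)) as [r [he [hr hc]]].
      { rewrite length_app in *. simpl in hl. lia. }
      exists r. split; [|split; [exact hr|]].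
      * eapply EQV_trans; [|exact he]. intro c. split; [apply mid0_IMP| apply mid0_IMP'].
      * intro w. rewrite hc, !coef_app. simpl. destruct (Nat.eq_dec v w); lra.
    + destruct (dup_or_nodup t) as [nd|[a [b [v [t' hp]]]]].
      * exists t. split; [apply EQV_refl|]. split; [split; [exact nd|]| reflexivity].
        intros p hp e. apply hno. exists p. auto.
      * destruct (IH ((a + b, v) :: t')) as [r [he [hr hc]]].
        { apply Permutation_length in hp. simpl in *. lia. }
        exists r. split; [|split; [exact hr|]].
        -- eapply EQV_trans; [apply EQV_perm, hp|]. eapply EQV_trans; [|exact he].
           intro c. split; [apply merge_IMP| apply merge_IMP'].
        -- intro w. rewrite hc, (coef_perm _ _ _ hp). simpl. destruct (Nat.eq_dec v w); lra.
Qed.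

Theorem EQV_coef t u : (forall v, coef t v = coef u v) -> EQV t u.
Proof.
  intro h.
  destruct (reduce_ex (length t) t (le_n _)) as [r1 [e1 [h1 c1]]].
  destruct (reduce_ex (length u) u (le_n _)) as [r2 [e2 [h2 c2]]].
  eapply EQV_trans; [exact e1|]. eapply EQV_trans; [|apply EQV_sym; exact e2].
  apply EQV_perm, reduced_perm; auto. intro v. rewrite c1, c2. auto.
Qed.

Lemma IMP_coef t u c d : (forall v, coef t v = coef u v) -> d <= c -> IMP t c u d.
Proof.
  intros h hd. eapply IMP_trans; [apply weaken_IMP, hd|]. apply (EQV_coef t u h d).
Qed.

Lemma nil_ge0 : provable (FIneq [] 0).
Proof.
  eapply RuleMP; [apply (F1' 0%nat)|]. apply IMP_coef; [|lra].
  intro v. unfold coef. destruct (Nat.eq_dec 0 v); lra.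
Qed.

Lemma nil_not_ge c : c > 0 -> provable (FNot (FIneq [] c)).
Proof.
  intro hc. eapply imp_not_elim. apply (AxF6 [] c 0 hc).
  unfold FLe. simpl. replace (-0) with 0 by ring. apply nil_ge0.
Qed.


Fixpoint ev (t : term) (x : nat -> R) : R :=
  match t with [] => 0 | (a, v) :: t' => a * x v + ev t' x end.

Record cst := mkc { ct : term; cc : R; cb : bool }.
Definition satc (x : nat -> R) (k : cst) : Prop :=
  if cb k then ev (ct k) x > cc k else ev (ct k) x >= cc k.
Definition cadd (k1 k2 : cst) : cst := mkc (ct k1 ++ ct k2) (cc k1 + cc k2) (cb k1 || cb k2).
Definition cscale (l : R) (k : cst) : cst := mkc (scale l (ct k)) (l * cc k) (cb k).

Inductive der (S : list cst) : cst -> Prop :=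
| der_in k : In k S -> der S k
| der_add k1 k2 : der S k1 -> der S k2 -> der S (cadd k1 k2)
| der_scale l k : l > 0 -> der S k -> der S (cscale l k).

Lemma der_trans S S' k : (forall k', In k' S' -> der S k') -> der S' k -> der S k.
Proof. intros h d. induction d; [auto| apply der_add; auto| apply der_scale; auto]. Qed.

Definition contra (k : cst) := (forall v, coef (ct k) v = 0) /\ (cc k > 0 \/ (cb k = true /\ cc k >= 0)).

Definition rmv (v : nat) (t : term) : term :=
  filter (fun p => if Nat.eq_dec (snd p) v then false else true) t.

Lemma ev_remove v t x : ev t x = ev (rmv v t) x + coef t v * x v.
Proof.
  induction t as [|[a w] t IH]; simpl; [lra|].
  destruct (Nat.eq_dec w v) as [e|ne]; simpl; rewrite IH; [subst; lra| lra].
Qed.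

Lemma coef_remove_ne v t w : w <> v -> coef (rmv v t) w = coef t w.
Proof.
  intro hne. induction t as [|[a u] t IH]; simpl; [lra|].
  destruct (Nat.eq_dec u v) as [e|ne]; simpl.
  - subst. destruct (Nat.eq_dec v w); [congruence|]. lra.
  - rewrite IH. reflexivity.
Qed.

Lemma coef_remove_eq v t : coef (rmv v t) v = 0.
Proof.
  induction t as [|[a u] t IH]; simpl; [lra|].
  destruct (Nat.eq_dec u v) as [e|ne]; simpl; [exact IH|].
  destruct (Nat.eq_dec u v); [congruence|]. lra.
Qed.

Lemma remove_vars v t w : In w (map snd (rmv v t)) -> w <> v.
Proof.
  unfold rmv. intro h. apply in_map_iff in h. destruct h as [[a u] [e h]]. simpl in e. subst.
  apply filter_In in h. destruct h as [_ h]. simpl in h. destruct (Nat.eq_dec w v); congruence.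
Qed.

Lemma ev_ext t x y : (forall w, In w (map snd t) -> x w = y w) -> ev t x = ev t y.
Proof.
  induction t as [|[a u] t IH]; simpl; intro h; [lra|].
  rewrite h by auto. rewrite IH by auto. reflexivity.
Qed.

Lemma ev_coef0_aux n : forall t x, (length t <= n)%nat -> (forall v, coef t v = 0) -> ev t x = 0.
Proof.
  induction n as [|n IH]; intros t x hl hc.
  - destruct t; [reflexivity| simpl in hl; lia].
  - destruct t as [|[a v] t']; [reflexivity|].
    rewrite (ev_remove v). rewrite hc, Rmult_0_l, Rplus_0_r.
    apply IH.
    + simpl in hl. unfold rmv. simpl. destruct (Nat.eq_dec v v); [|congruence].
      pose proof (filter_length_le (fun p : R * nat => if Nat.eq_dec (snd p) v then false else true) t'). lia.
    + intro w. destruct (Nat.eq_dec w v) as [->|ne]; [apply coef_remove_eq| rewrite coef_remove_ne; auto].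
Qed.

Lemma ev_coef0 t x : (forall v, coef t v = 0) -> ev t x = 0.
Proof. apply (ev_coef0_aux (length t)). lia. Qed.

Lemma ev_app t1 t2 x : ev (t1 ++ t2) x = ev t1 x + ev t2 x.
Proof. induction t1 as [|[a w] t IH]; simpl; [lra| rewrite IH; lra]. Qed.
Lemma ev_scale d t x : ev (scale d t) x = d * ev t x.
Proof. induction t as [|[a w] t IH]; simpl; [lra| rewrite IH; lra]. Qed.

Lemma argmax {A} (l : list A) (f : A -> R) : l <> [] -> exists m, In m l /\ forall y, In y l -> f y <= f m.
Proof.
  induction l as [|a l IH]; intro h; [congruence|].
  destruct l as [|b l'].
  - exists a. split; [left; auto|]. intros y [<-|[]]. lra.
  - destruct IH as [m [hm hy]]; [congruence|].
    destruct (Rle_dec (f a) (f m)).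
    + exists m. split; [right; auto|]. intros y [<-|hy']; auto.
    + exists a. split; [left; auto|]. intros y [<-|hy']; [lra|]. specialize (hy y hy'). lra.
Qed.

Lemma between {A B} (L : list A) (U : list B) (lo : A -> R) (lb : A -> bool) (hi : B -> R) (hb : B -> bool) :
  (forall p n, In p L -> In n U -> lo p <= hi n /\ ((lb p = true \/ hb n = true) -> lo p < hi n)) ->
  exists t, (forall p, In p L -> lo p <= t /\ (lb p = true -> lo p < t)) /\
            (forall n, In n U -> t <= hi n /\ (hb n = true -> t < hi n)).
Proof.
  intro h.
  destruct L as [|p0 L']; [destruct U as [|n0 U']|].
  - exists 0. split; intros ? [].
  - destruct (argmax (n0 :: U') (fun n => - hi n)) as [m [hm hmax]]; [congruence|].
    exists (hi m - 1). split; [intros ? []|]. intros n hn. specialize (hmax n hn). split; intros; lra.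
  - destruct U as [|n0 U'].
    + destruct (argmax (p0 :: L') lo) as [m [hm hmax]]; [congruence|].
      exists (lo m + 1). split; [|intros ? []]. intros p hp. specialize (hmax p hp). split; intros; lra.
    + destruct (argmax (p0 :: L') lo) as [m [hm hmax]]; [congruence|].
      destruct (argmax (n0 :: U') (fun n => - hi n)) as [M [hM hmin]]; [congruence|].
      destruct (h m M hm hM) as [hmM _].
      destruct (Rle_lt_or_eq_dec _ _ hmM) as [lt|eq].
      * exists ((lo m + hi M) / 2). split.
        -- intros p hp. specialize (hmax p hp). split; intros; lra.
        -- intros n hn. specialize (hmin n hn). simpl in hmin. split; intros; lra.
      * exists (lo m). split.
        -- intros p hp. specialize (hmax p hp). split; [lra|]. intro hl.
           destruct (h p M hp hM) as [_ h2]. specialize (h2 (or_introl hl)). lra.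
        -- intros n hn. specialize (hmin n hn). simpl in hmin. split; [lra|]. intro hh.
           destruct (h m n hm hn) as [_ h2]. specialize (h2 (or_intror hh)). lra.
Qed.

Lemma pair_alg a b Rp Rn cp cn X :
  0 < a -> b < 0 ->
  (- b * (Rp + a * X) + a * (Rn + b * X) >= - b * cp + a * cn -> (cp - Rp) / a <= (cn - Rn) / b) /\
  (- b * (Rp + a * X) + a * (Rn + b * X) > - b * cp + a * cn -> (cp - Rp) / a < (cn - Rn) / b).
Proof.
  intros ha hb.
  set (Y := (cp - Rp) / a). set (Z := (cn - Rn) / b).
  assert (e1 : cp = Y * a + Rp) by (unfold Y; field; lra).
  assert (e2 : cn = Z * b + Rn) by (unfold Z; field; lra).
  rewrite e1, e2. split; intro h.
  - destruct (Rle_or_lt Y Z) as [|hl]; auto. exfalso.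
    assert (a * (- b) * (Y - Z) > 0) by (apply Rmult_lt_0_compat; [nra| lra]). nra.
  - destruct (Rlt_or_le Y Z) as [|hl]; auto. exfalso.
    assert (a * (- b) * (Y - Z) >= 0) by (apply Rle_ge, Rmult_le_pos; [nra| lra]). nra.
Qed.

Lemma lower_ok a c Rr t : 0 < a -> ((c - Rr) / a <= t -> Rr + a * t >= c) /\ ((c - Rr) / a < t -> Rr + a * t > c).
Proof.
  intro ha. assert (e : c = a * ((c - Rr) / a) + Rr) by (field; lra).
  split; intro h; rewrite e; [apply Rle_ge|]; apply Rplus_le_lt_0_compat || idtac; nra.
Qed.

Lemma upper_ok b c Rr t : b < 0 -> (t <= (c - Rr) / b -> Rr + b * t >= c) /\ (t < (c - Rr) / b -> Rr + b * t > c).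
Proof.
  intro hb. assert (e : c = b * ((c - Rr) / b) + Rr) by (field; lra).
  split; intro h; rewrite e; nra.
Qed.


Definition bz (r : R) : bool := if Req_EM_T r 0 then true else false.
Definition bpos (r : R) : bool := if Rlt_dec 0 r then true else false.
Definition bneg (r : R) : bool := if Rlt_dec r 0 then true else false.

Lemma satc_ev x y k : ev (ct k) x = ev (ct k) y -> satc x k -> satc y k.
Proof. unfold satc. intro e. rewrite e. auto. Qed.

Theorem farkas vs : forall S, (forall k, In k S -> forall w, ~ In w vs -> coef (ct k) w = 0) ->
  ~ (exists x, forall k, In k S -> satc x k) -> exists k, der S k /\ contra k.
Proof.
  induction vs as [|v vs IH]; intros S hsupp hinf.
  - assert (h0 : forall k, In k S -> forall x, ev (ct k) x = 0).
    { intros k hk x. apply ev_coef0. intro w. apply hsupp; auto. }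
    assert (exists k, In k S /\ ~ satc (fun _ => 0) k) as [k [hk hns]].
    { apply NNPP. intro hn. apply hinf. exists (fun _ => 0). intros k hk. apply NNPP. intro. apply hn. eauto. }
    exists k. split; [apply der_in; auto|]. split.
    + intro w. apply hsupp; auto.
    + unfold satc in hns. rewrite h0 in hns by auto. destruct (cb k); [right; split; [auto| lra]| left; lra].
  - set (cv := fun k => coef (ct k) v).
    set (Z := filter (fun k => bz (cv k)) S).
    set (Pos := filter (fun k => bpos (cv k)) S).
    set (Neg := filter (fun k => bneg (cv k)) S).
    set (comb := fun p n => cadd (cscale (- cv n) p) (cscale (cv p) n)).
    set (S' := Z ++ flat_map (fun p => map (fun n => comb p n) Neg) Pos).
    assert (inS' : forall k, In k S' -> In k Z \/ exists p n, In p Pos /\ In n Neg /\ k = comb p n).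
    { intros k hk. unfold S' in hk. apply in_app_or in hk. destruct hk as [hk|hk]; [auto|right].
      apply in_flat_map in hk. destruct hk as [p [hp hk]]. apply in_map_iff in hk. destruct hk as [n [e hn]].
      exists p, n. auto. }
    assert (hPos : forall p, In p Pos -> In p S /\ 0 < cv p).
    { intros p hp. apply filter_In in hp. destruct hp as [h1 h2]. unfold bpos in h2.
      destruct (Rlt_dec 0 (cv p)); [auto| discriminate]. }
    assert (hNeg : forall p, In p Neg -> In p S /\ cv p < 0).
    { intros p hp. apply filter_In in hp. destruct hp as [h1 h2]. unfold bneg in h2.
      destruct (Rlt_dec (cv p) 0); [auto| discriminate]. }
    assert (hZ : forall p, In p Z -> In p S /\ cv p = 0).
    { intros p hp. apply filter_In in hp. destruct hp as [h1 h2]. unfold bz in h2.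
      destruct (Req_EM_T (cv p) 0); [auto| discriminate]. }
    assert (coef_comb : forall p n w, coef (ct (comb p n)) w = - cv n * coef (ct p) w + cv p * coef (ct n) w).
    { intros p n w. simpl. rewrite coef_app, !coef_scale. reflexivity. }
    assert (ev_comb : forall p n x, ev (ct (comb p n)) x = - cv n * ev (ct p) x + cv p * ev (ct n) x).
    { intros p n x. simpl. rewrite ev_app, !ev_scale. reflexivity. }
    assert (derS : forall k, In k S' -> der S k).
    { intros k hk. destruct (inS' k hk) as [hz|[p [n [hp [hn ->]]]]].
      - apply der_in, hZ, hz.
      - apply der_add; apply der_scale.
        + destruct (hNeg n hn). lra.
        + apply der_in, hPos, hp.
        + destruct (hPos p hp). lra.
        + apply der_in, hNeg, hn. }
    destruct (IH S') as [k [hd hc]].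
    + intros k hk w hw. destruct (Nat.eq_dec w v) as [->|ne].
      * destruct (inS' k hk) as [hz|[p [n [hp [hn ->]]]]].
        -- apply hZ, hz.
        -- rewrite coef_comb. fold (cv p) (cv n). lra.
      * assert (hw' : ~ In w (v :: vs)) by (simpl; intros [e|e]; [congruence| tauto]).
        destruct (inS' k hk) as [hz|[p [n [hp [hn ->]]]]].
        -- apply hsupp; [apply hZ, hz| exact hw'].
        -- rewrite coef_comb. rewrite (hsupp p), (hsupp n); auto; [ring| apply hNeg, hn| apply hPos, hp].
    + intros [x' hx']. apply hinf.
      set (Rr := fun k => ev (rmv v (ct k)) x').
      assert (evx' : forall k, ev (ct k) x' = Rr k + cv k * x' v) by (intro k; apply ev_remove).
      destruct (between Pos Neg (fun p => (cc p - Rr p) / cv p) cb (fun n => (cc n - Rr n) / cv n) cb)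
        as [t0 [hlo hhi]].
      { intros p n hp hn. destruct (hPos p hp) as [_ ha]. destruct (hNeg n hn) as [_ hb].
        assert (hs : satc x' (comb p n)).
        { apply hx'. unfold S'. apply in_or_app. right. apply in_flat_map. exists p. split; auto.
          apply in_map. auto. }
        unfold satc in hs. rewrite ev_comb, !evx' in hs. simpl in hs.
        destruct (pair_alg (cv p) (cv n) (Rr p) (Rr n) (cc p) (cc n) (x' v) ha hb) as [h1 h2].
        unfold comb, cadd, cscale in hs; simpl in hs.
        destruct (cb p), (cb n); simpl in hs; split; try (intros; apply h2; lra); try (apply h1; lra);
          try (apply Rlt_le, h2; lra); intros [e|e]; discriminate. }
      set (x := fun w => if Nat.eq_dec w v then t0 else x' w).
      assert (evx : forall k, ev (ct k) x = Rr k + cv k * t0).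
      { intro k. rewrite (ev_remove v). unfold Rr. f_equal.
        - apply ev_ext. intros w hw. unfold x. destruct (Nat.eq_dec w v); [|reflexivity].
          exfalso. eapply remove_vars; eauto.
        - unfold x. destruct (Nat.eq_dec v v); [reflexivity| congruence]. }
      exists x. intros k hk.
      destruct (Rtotal_order (cv k) 0) as [hn|[hz|hp]].
      * assert (hn' : In k Neg) by (apply filter_In; split; auto; unfold bneg; destruct (Rlt_dec (cv k) 0); [auto| lra]).
        destruct (hhi k hn') as [h1 h2]. unfold satc. rewrite evx.
        destruct (upper_ok (cv k) (cc k) (Rr k) t0 hn) as [u1 u2].
        destruct (cb k); auto.
      * assert (hz' : In k Z) by (apply filter_In; split; auto; unfold bz; destruct (Req_EM_T (cv k) 0); [auto| lra]).
        assert (hs : satc x' k) by (apply hx'; unfold S'; apply in_or_app; auto).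
        eapply satc_ev; [|exact hs]. rewrite evx, evx', hz. ring.
      * assert (hp' : In k Pos) by (apply filter_In; split; auto; unfold bpos; destruct (Rlt_dec 0 (cv k)); [auto| lra]).
        destruct (hlo k hp') as [h1 h2]. unfold satc. rewrite evx.
        destruct (lower_ok (cv k) (cc k) (Rr k) t0 hp) as [u1 u2].
        destruct (cb k); auto.
    + exists k. split; [|exact hc]. eapply der_trans; [exact derS| exact hd].
Qed.


Definition negt (u : term) : term := map (fun p => (- fst p, snd p)) u.
Lemma coef_negt u v : coef (negt u) v = - coef u v.
Proof. induction u as [|[a w] u IH]; simpl; [lra| rewrite IH; destruct (Nat.eq_dec w v); lra]. Qed.
Lemma ev_negt u x : ev (negt u) x = - ev u x.
Proof. induction u as [|[a w] u IH]; simpl; [lra| rewrite IH; lra]. Qed.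

Definition sys (P : list (term * R)) (ud : term * R) : list cst :=
  mkc (negt (fst ud)) (- snd ud) true :: map (fun tc => mkc (fst tc) (snd tc) false) P.

Lemma inv H P u d :
  (forall tc, In tc P -> provable (FImp H (FIneq (fst tc) (snd tc)))) ->
  forall k, der (sys P (u, d)) k -> exists T C mu, 0 <= mu /\ provable (FImp H (FIneq T C)) /\
    (forall v, coef (ct k) v = coef T v - mu * coef u v) /\ cc k = C - mu * d /\ (cb k = true -> mu > 0).
Proof.
  intros hP k hd. induction hd as [k hk| k1 k2 _ IH1 _ IH2| l k hl _ IH].
  - destruct hk as [<-|hk].
    + exists [], 0, 1. simpl. split; [lra|]. split; [apply weak, nil_ge0|].
      split; [intro v; rewrite coef_negt; lra|]. split; [lra|]. intros; lra.
    + apply in_map_iff in hk. destruct hk as [[t c] [<- hin]].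
      exists t, c, 0. simpl. split; [lra|]. split; [apply (hP (t, c) hin)|].
      split; [intro; lra|]. split; [lra| discriminate].
  - destruct IH1 as [T1 [C1 [m1 [h1 [p1 [c1 [e1 s1]]]]]]].
    destruct IH2 as [T2 [C2 [m2 [h2 [p2 [c2 [e2 s2]]]]]]].
    exists (T1 ++ T2), (C1 + C2), (m1 + m2). split; [lra|]. split; [apply sum_H; auto|].
    simpl. split; [intro v; rewrite !coef_app, c1, c2; ring|]. split; [rewrite e1, e2; ring|].
    intro hb. apply Bool.orb_true_iff in hb. destruct hb as [hb|hb]; [specialize (s1 hb)| specialize (s2 hb)]; lra.
  - destruct IH as [T [C [m [h [p [c [e s]]]]]]].
    exists (scale l T), (l * C), (l * m). split; [nra|].
    split; [eapply hyp_IMP; [exact p| apply scale_IMP, hl]|].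
    simpl. split; [intro v; rewrite !coef_scale, c; ring|]. split; [rewrite e; ring|].
    intro hb. specialize (s hb). nra.
Qed.

Lemma eval_ev {D} (s : nat -> D -> R) t d : eval_term s t d = ev t (fun v => s v d).
Proof. induction t as [|[a w] t IH]; simpl; [reflexivity| rewrite IH; reflexivity]. Qed.

Theorem core H (P N : list (term * R)) :
  (forall tc, In tc P -> provable (FImp H (FIneq (fst tc) (snd tc)))) ->
  (forall ud, In ud N -> provable (FImp H (FNot (FIneq (fst ud) (snd ud))))) ->
  ~ (exists (D : Type) (s : nat -> D -> R), inhabited D /\
       (forall tc, In tc P -> sat s (FIneq (fst tc) (snd tc))) /\
       (forall ud, In ud N -> ~ sat s (FIneq (fst ud) (snd ud)))) ->
  provable (FNot H).
Proof.
  intros hP hN hunsat.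
  set (negs := ([], 1) :: N).
  assert (hN' : forall ud, In ud negs -> provable (FImp H (FNot (FIneq (fst ud) (snd ud))))).
  { intros ud [<-|h]; [simpl; apply weak, nil_not_ge; lra| auto]. }
  destruct (classic (exists ud, In ud negs /\ ~ exists x, forall k, In k (sys P ud) -> satc x k))
    as [[[u d] [hin hinf]]|hno].
  - destruct (farkas (flat_map (fun k => map snd (ct k)) (sys P (u, d))) (sys P (u, d))) as [k [hd [hc0 hcc]]].
    + intros k hk w hw. apply coef_notin. intro h. apply hw. apply in_flat_map. eauto.
    + exact hinf.
    + destruct (inv H P u d hP k hd) as [T [C [m [hm [hT [hc [he hs]]]]]]].
      assert (hcT : forall v, coef T v = m * coef u v) by (intro v; specialize (hc v); rewrite hc0 in hc; lra).
      destruct (Req_dec m 0) as [m0|mpos].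
      * assert (hC : C > 0).
        { rewrite m0 in he. destruct hcc as [h|[hb h]]; [lra| specialize (hs hb); lra]. }
        eapply imp_mp; [|apply (nil_not_ge C hC)].
        eapply hyp_IMP; [exact hT|]. apply IMP_coef; [|lra]. intro v. rewrite hcT, m0. simpl. ring.
      * assert (hm' : m > 0) by lra.
        apply (refute H (FIneq u d)); [|apply (hN' (u, d) hin)].
        eapply hyp_IMP; [exact hT|].
        eapply IMP_trans; [apply weaken_IMP with (d := m * d); destruct hcc as [h|[_ h]]; lra|].
        eapply IMP_trans; [apply scale_IMP with (d := / m); apply Rinv_0_lt_compat, hm'|].
        apply IMP_coef.
        -- intro v. rewrite coef_scale, hcT. field. lra.
        -- right. field. lra.
  - exfalso. apply hunsat.
    assert (hfeas : forall ud, In ud negs -> exists x, forall k, In k (sys P ud) -> satc x k).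
    { intros ud hud. apply NNPP. intro hn. apply hno. eauto. }
    assert (hPx : forall ud x, (forall k, In k (sys P ud) -> satc x k) ->
                   forall tc, In tc P -> ev (fst tc) x >= snd tc).
    { intros ud x hx tc htc. specialize (hx (mkc (fst tc) (snd tc) false)). apply hx.
      right. apply in_map_iff. exists tc. auto. }
    destruct (hfeas ([], 1) (or_introl eq_refl)) as [x0 hx0].
    set (Dt := {x : nat -> R | forall tc, In tc P -> ev (fst tc) x >= snd tc}).
    exists Dt, (fun v (d : Dt) => proj1_sig d v). split; [|split].
    + constructor. exists x0. eapply hPx; eauto.
    + intros tc htc. simpl. intros [x hx]. rewrite eval_ev. simpl. apply hx, htc.
    + intros [u d] hud. simpl. intro hall.
      destruct (hfeas (u, d) (or_intror hud)) as [x hx].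
      assert (hxP : forall tc, In tc P -> ev (fst tc) x >= snd tc) by (eapply hPx; eauto).
      specialize (hall (exist _ x hxP)). rewrite eval_ev in hall. simpl in hall.
      specialize (hx _ (or_introl eq_refl)). unfold satc in hx. simpl in hx. rewrite ev_negt in hx. change (ev u x >= d) in hall. lra.
Qed.


Fixpoint atoms (f : form) : list (term * R) :=
  match f with FIneq t c => [(t, c)] | FNot g => atoms g | FAnd g h => atoms g ++ atoms h end.
Fixpoint absf (f : form) (off : nat) : pform :=
  match f with
  | FIneq _ _ => PVar off
  | FNot g => PNot (absf g off)
  | FAnd g h => PAnd (absf g off) (absf h (off + length (atoms g)))
  end.
Definition dflt : term * R := ([], 0).
Definition sbA (atl : list (term * R)) (i : nat) : form := FIneq (fst (nth i atl dflt)) (snd (nth i atl dflt)).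

Lemma abs_subst f : forall pre post, psubst (sbA (pre ++ atoms f ++ post)) (absf f (length pre)) = f.
Proof.
  induction f as [t c| g IH| g IHg h IHh]; intros pre post; simpl.
  - unfold sbA. rewrite nth_middle. reflexivity.
  - rewrite IH. reflexivity.
  - rewrite <- app_assoc. rewrite IHg. f_equal.
    replace (pre ++ atoms g ++ atoms h ++ post) with ((pre ++ atoms g) ++ atoms h ++ post) by (rewrite <- app_assoc; reflexivity).
    rewrite <- length_app. apply IHh.
Qed.

Lemma abs_local f : forall off val val', (forall i, (off <= i < off + length (atoms f))%nat -> val i = val' i) ->
  peval val (absf f off) = peval val' (absf f off).
Proof.
  induction f as [t c| g IH| g IHg h IHh]; intros off val val' he; simpl.
  - apply he. simpl. lia.
  - rewrite (IH off val val'); auto.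
  - simpl in he. rewrite length_app in he. rewrite (IHg off val val'), (IHh _ val val'); auto; intros i hi; apply he; lia.
Qed.

Definition ptrue : pform := pimp (PVar 0) (PVar 0).
Fixpoint litp (w : list bool) (i : nat) : pform :=
  match w with [] => ptrue | b :: w' => PAnd (if b then PVar i else PNot (PVar i)) (litp w' (S i)) end.

Lemma lit_proj sb w : forall i j, (j < length w)%nat ->
  provable (FImp (psubst sb (litp w i)) (psubst sb (if nth j w false then PVar (i + j) else PNot (PVar (i + j))))).
Proof.
  induction w as [|b w IH]; intros i j hj; simpl in hj; [lia|].
  destruct j as [|j].
  - simpl. rewrite Nat.add_0_r. apply and_l.
  - simpl. eapply imp_trans; [apply and_r|]. replace (i + S j)%nat with (S i + j)%nat by lia. apply IH. lia.
Qed.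

Lemma litp_true val w : forall i, (forall j, (j < length w)%nat -> val (i + j)%nat = nth j w false) -> peval val (litp w i) = true.
Proof.
  induction w as [|b w IH]; intros i h; simpl.
  - destruct (val 0%nat); reflexivity.
  - specialize (h 0%nat) as h0. simpl in h0. rewrite Nat.add_0_r in h0. rewrite IH.
    + destruct b; simpl; rewrite h0; auto; lia.
    + intros j hj. replace (S i + j)%nat with (i + S j)%nat by lia. apply (h (S j)). simpl. lia.
Qed.

Fixpoint allbools (n : nat) : list (list bool) :=
  match n with 0 => [[]] | S n => flat_map (fun w => [true :: w; false :: w]) (allbools n) end.

Lemma allbools_in n w : length w = n -> In w (allbools n).
Proof.
  revert w. induction n as [|n IH]; intros w hw; simpl.
  - destruct w; [auto| simpl in hw; lia].
  - destruct w as [|b w]; [simpl in hw; lia|]. apply in_flat_map. exists w. split; [apply IH; simpl in hw; lia|].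
    destruct b; simpl; auto.
Qed.

Lemma allbools_len n w : In w (allbools n) -> length w = n.
Proof.
  revert w. induction n as [|n IH]; intros w hw; simpl in hw.
  - destruct hw as [<-|[]]. reflexivity.
  - apply in_flat_map in hw. destruct hw as [w' [h1 h2]]. simpl in h2.
    destruct h2 as [<-|[<-|[]]]; simpl; rewrite (IH _ h1); reflexivity.
Qed.

Fixpoint bigand (l : list pform) : pform := match l with [] => ptrue | q :: l' => PAnd q (bigand l') end.

Lemma bigand_prov sb l : (forall q, In q l -> provable (psubst sb q)) -> provable (psubst sb (bigand l)).
Proof.
  induction l as [|q l IH]; intro h; simpl.
  - apply imp_refl.
  - apply and_intro; [apply h; simpl; auto| apply IH; intros; apply h; simpl; auto].
Qed.

Lemma bigand_false val l q : In q l -> peval val q = false -> peval val (bigand l) = false.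
Proof.
  induction l as [|q' l IH]; intros hin hq; simpl in *; [tauto|].
  destruct hin as [<-|hin]; [rewrite hq; reflexivity| rewrite IH; auto; apply Bool.andb_false_r].
Qed.

Lemma nth_map_seq (val : nat -> bool) n i : (i < n)%nat -> nth i (map val (seq 0 n)) false = val i.
Proof.
  intro h. rewrite nth_indep with (d' := val 0%nat) by (rewrite length_map, length_seq; lia).
  rewrite map_nth, seq_nth by lia. reflexivity.
Qed.

Theorem completeness f : valid f -> provable f.
Proof.
  intro hv.
  set (atl := atoms f). set (n := length atl). set (p := absf f 0). set (sb := sbA atl).
  assert (hf : psubst sb p = f).
  { pose proof (abs_subst f [] []) as h. rewrite app_nil_r in h. exact h. }
  set (bad := filter (fun w => negb (peval (fun i => nth i w false) p)) (allbools n)).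
  set (Bp := bigand (map (fun w => PNot (litp w 0)) bad)).
  assert (hQ : provable (psubst sb (pimp Bp p))).
  { apply AxTaut. exists (pimp Bp p), sb. split; [|reflexivity].
    intro val. simpl. destruct (peval val p) eqn:ep; [rewrite Bool.andb_false_r; reflexivity|].
    set (w := map val (seq 0 n)).
    assert (hw : forall i, (i < n)%nat -> nth i w false = val i) by (intros; apply nth_map_seq; auto).
    assert (hwin : In w bad).
    { apply filter_In. split; [apply allbools_in; unfold w; rewrite length_map, length_seq; reflexivity|].
      unfold p. rewrite (abs_local f 0 _ val); [fold p; rewrite ep; reflexivity|].
      intros i hi. apply hw. unfold n, atl. lia. }
    unfold Bp. rewrite (bigand_false val _ (PNot (litp w 0))); [reflexivity| apply (in_map (fun w => PNot (litp w 0))); exact hwin|].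
    simpl. rewrite litp_true; [reflexivity|]. intros j hj. simpl. rewrite hw; [reflexivity|].
    unfold w in hj. rewrite length_map, length_seq in hj. exact hj. }
  assert (hB : provable (psubst sb Bp)).
  { apply bigand_prov. intros q hq. apply in_map_iff in hq. destruct hq as [w [<- hw]].
    apply filter_In in hw. destruct hw as [hwa hwb]. apply allbools_len in hwa.
    simpl. set (H := psubst sb (litp w 0)).
    apply (core H (map (fun i => nth i atl dflt) (filter (fun i => nth i w false) (seq 0 n)))
                  (map (fun i => nth i atl dflt) (filter (fun i => negb (nth i w false)) (seq 0 n)))).
    - intros tc htc. apply in_map_iff in htc. destruct htc as [i [<- hi]].
      apply filter_In in hi. destruct hi as [hi1 hi2]. apply in_seq in hi1.
      pose proof (lit_proj sb w 0 i ltac:(lia)) as h. rewrite hi2 in h. exact h.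
    - intros tc htc. apply in_map_iff in htc. destruct htc as [i [<- hi]].
      apply filter_In in hi. destruct hi as [hi1 hi2]. apply in_seq in hi1.
      pose proof (lit_proj sb w 0 i ltac:(lia)) as h. destruct (nth i w false); [discriminate|]. exact h.
    - intros [D [s [hinh [hpos hneg]]]].
      pose proof (hv D hinh s) as hs. rewrite <- hf in hs. apply sat_psubst in hs.
      unfold p in hs. rewrite (abs_local f 0 _ (fun i => nth i w false)) in hs.
      + fold p in hs. rewrite hs in hwb. discriminate.
      + intros i hi. simpl in hi. unfold tv.
        destruct (excluded_middle_informative _) as [hsat|hns]; destruct (nth i w false) eqn:ew; auto.
        * exfalso. apply (hneg (nth i atl dflt)); [|exact hsat].
          apply (in_map (fun i => nth i atl dflt)). apply filter_In. split; [apply in_seq; fold atl n in hi; lia| rewrite ew; reflexivity].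
        * exfalso. apply hns. apply (hpos (nth i atl dflt)).
          apply (in_map (fun i => nth i atl dflt)). apply filter_In. split; [apply in_seq; fold atl n in hi; lia| exact ew]. }
  rewrite <- hf. eapply RuleMP; [exact hB| exact hQ].
Qed.

Theorem theorem7p3 : forall f : form, provable f <-> valid f.
Proof. intro f. split; [apply soundness| apply completeness]. Qed.
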